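(* Let $x,y$ be elements both lying in $A$ or both lying in $B$, with $x,y\notin H$, and suppose $x=c^{\alpha}d^{\beta}yc^{\gamma}d^{\delta}$ for some integers $\alpha,\beta,\gamma,\delta$. If $x,y\in A$, then the integers $\alpha+\gamma$, $\beta$ and $\delta$ are uniquely determined by this equality (i.e. any two such representations give the same values). If $x,y\in B$, then $\beta+\delta$, $\alpha$ and $\gamma$ are uniquely determined by this equality.
   Context: Fix integers $m,n>1$ and let $G_{mn}=\langle a,b;\ [a^m,b^n]=1\rangle$. Put $c=a^m$, $d=b^n$, $H=\langle c,d\rangle$ (free abelian with basis $c,d$), $A=\langle a,H\rangle$, $B=\langle b,H\rangle$. *)

(* Defs.v *)
(* The group G_mn = < a, b ; [a^m, b^n] = 1 > is modelled
   concretely: elements are words in a^{+-1}, b^{+-1}, and equality in G_mn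
   is the congruence generated by free cancellation and the relator. *)
From Stdlib Require Import List ZArith.
Import ListNotations.
Open Scope Z_scope.

Inductive gen := Ga | Gb.
(* a letter is a generator together with a flag "inverted" *)
Definition letter := (gen * bool)%type.
Definition word := list letter.

Definition inv_letter (l : letter) : letter := (fst l, negb (snd l)).
Definition winv (w : word) : word := rev (map inv_letter w).

Fixpoint wpow_nat (w : word) (k : nat) : word :=
  match k with O => [] | S k' => w ++ wpow_nat w k' end.

Definition wpow (w : word) (z : Z) : word :=
  if Z.leb 0 z then wpow_nat w (Z.to_nat z) else wpow_nat (winv w) (Z.to_nat (- z)).

Definition wa : word := [(Ga, false)].
Definition wb : word := [(Gb, false)].

Definition wcomm (x y : word) : word := winv x ++ winv y ++ x ++ y.

Definition wc (m : nat) : word := wpow wa (Z.of_nat m).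
Definition wd (n : nat) : word := wpow wb (Z.of_nat n).

Definition relator (m n : nat) : word := wcomm (wc m) (wd n).

Inductive geq (m n : nat) : word -> word -> Prop :=
| geq_refl w : geq m n w w
| geq_sym u v : geq m n u v -> geq m n v u
| geq_trans u v w : geq m n u v -> geq m n v w -> geq m n u w
| geq_cancel u v l : geq m n (u ++ l :: inv_letter l :: v) (u ++ v)
| geq_rel u v : geq m n (u ++ relator m n ++ v) (u ++ v).

Inductive in_subgroup (m n : nat) (gens : list word) : word -> Prop :=
| sub_one x : geq m n x [] -> in_subgroup m n gens x
| sub_gen g y x : In g gens -> in_subgroup m n gens y ->
    geq m n x (g ++ y) -> in_subgroup m n gens x
| sub_geninv g y x : In g gens -> in_subgroup m n gens y ->
    geq m n x (winv g ++ y) -> in_subgroup m n gens x.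

Definition inH (m n : nat) := in_subgroup m n [wc m; wd n].
Definition inA (m n : nat) := in_subgroup m n [wa; wc m; wd n].
Definition inB (m n : nat) := in_subgroup m n [wb; wc m; wd n].

Definition twisted (m n : nat) (y : word) (al be ga de : Z) : word :=
  wpow (wc m) al ++ wpow (wd n) be ++ y ++ wpow (wc m) ga ++ wpow (wd n) de.

(* Main.v *)
Require Import Defs.
From Stdlib Require Import List ZArith Lia Setoid Morphisms.
Import ListNotations.
Open Scope Z_scope.

Lemma geq_app_l m n w u v : geq m n u v -> geq m n (w ++ u) (w ++ v).
Proof.
  induction 1.
  - apply geq_refl.
  - now apply geq_sym.
  - eapply geq_trans; eauto.
  - rewrite !(app_assoc w). apply geq_cancel.
  - rewrite !(app_assoc w). apply geq_rel.
Qed.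

Lemma geq_app_r m n w u v : geq m n u v -> geq m n (u ++ w) (v ++ w).
Proof.
  induction 1.
  - apply geq_refl.
  - now apply geq_sym.
  - eapply geq_trans; eauto.
  - rewrite <- !app_assoc. simpl. apply geq_cancel.
  - rewrite <- !app_assoc. apply geq_rel.
Qed.

Lemma geq_app m n u u' v v' : geq m n u u' -> geq m n v v' -> geq m n (u ++ v) (u' ++ v').
Proof. intros H1 H2. eapply geq_trans. apply geq_app_r, H1. apply geq_app_l, H2. Qed.

Lemma inv_letter_inv l : inv_letter (inv_letter l) = l.
Proof. destruct l; unfold inv_letter; simpl; now rewrite Bool.negb_involutive. Qed.

Lemma winv_app u v : winv (u ++ v) = winv v ++ winv u.
Proof. unfold winv. now rewrite map_app, rev_app_distr. Qed.

Lemma winv_cons l w : winv (l :: w) = winv w ++ [inv_letter l].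
Proof. reflexivity. Qed.

Lemma winv_inv w : winv (winv w) = w.
Proof.
  unfold winv. rewrite map_rev, rev_involutive, map_map.
  erewrite map_ext. apply map_id. apply inv_letter_inv.
Qed.

Lemma inv_r m n w : geq m n (w ++ winv w) [].
Proof.
  induction w as [|a w IH]; simpl.
  - apply geq_refl.
  - rewrite winv_cons, app_assoc.
    change (a :: (w ++ winv w) ++ [inv_letter a]) with ([a] ++ (w ++ winv w) ++ [inv_letter a]).
    eapply geq_trans. apply geq_app_l, geq_app_r, IH.
    exact (geq_cancel m n [] [] a).
Qed.

Lemma inv_l m n w : geq m n (winv w ++ w) [].
Proof. rewrite <- (winv_inv w) at 2. apply inv_r. Qed.

Lemma cancel_l m n w X Y : geq m n X (w ++ Y) -> geq m n Y (winv w ++ X).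
Proof.
  intro H. eapply geq_trans. 2: apply geq_app_l, geq_sym, H.
  rewrite app_assoc. apply geq_sym.
  eapply geq_trans. apply geq_app_r, inv_l. apply geq_refl.
Qed.

Lemma cancel_r m n u v X : geq m n (u ++ X) (v ++ X) -> geq m n u v.
Proof.
  intro H.
  apply geq_trans with ((u ++ X) ++ winv X).
  { rewrite <- app_assoc. apply geq_sym. eapply geq_trans. apply geq_app_l, inv_r. rewrite app_nil_r; apply geq_refl. }
  apply geq_trans with ((v ++ X) ++ winv X). now apply geq_app_r.
  rewrite <- app_assoc. eapply geq_trans. apply geq_app_l, inv_r. rewrite app_nil_r; apply geq_refl.
Qed.

Lemma winv_geq m n u v : geq m n u v -> geq m n (winv u) (winv v).
Proof.
  induction 1.
  - apply geq_refl.
  - now apply geq_sym.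
  - eapply geq_trans; eauto.
  - rewrite !winv_app, winv_cons, winv_cons. simpl. rewrite <- !app_assoc. simpl.
    rewrite inv_letter_inv. apply geq_cancel.
  - rewrite !winv_app. apply geq_app_r.
    assert (Hr : geq m n (winv (relator m n)) []).
    { apply geq_trans with (winv (relator m n) ++ relator m n).
      - apply geq_sym. pose proof (geq_rel m n (winv (relator m n)) []) as Hq.
        rewrite !app_nil_r in Hq. exact Hq.
      - apply inv_l. }
    eapply geq_trans. apply geq_app_l, Hr. rewrite app_nil_r. apply geq_refl.
Qed.

Lemma wpow0 w : wpow w 0 = [].
Proof. reflexivity. Qed.

Lemma wpow1 w : wpow w 1 = w ++ [].
Proof. reflexivity. Qed.

Lemma wpowm1 w : wpow w (-1) = winv w ++ [].
Proof. reflexivity. Qed.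

Lemma wpow_succ m n w s : geq m n (wpow w (s+1)) (w ++ wpow w s).
Proof.
  unfold wpow. destruct (Z.leb_spec 0 s), (Z.leb_spec 0 (s+1)); try lia.
  - replace (Z.to_nat (s+1)) with (S (Z.to_nat s)) by lia. apply geq_refl.
  - assert (s = -1) by lia. subst. simpl. rewrite app_nil_r. apply geq_sym, inv_r.
  - replace (Z.to_nat (-s)) with (S (Z.to_nat (-(s+1)))) by lia. simpl.
    rewrite app_assoc. apply geq_sym. eapply geq_trans. apply geq_app_r, inv_r. apply geq_refl.
Qed.

Lemma wpow_add m n w s t : geq m n (wpow w (s+t)) (wpow w s ++ wpow w t).
Proof.
  revert s. apply Z.peano_ind.
  - rewrite Z.add_0_l. apply geq_refl.
  - intros s IH. replace (Z.succ s + t) with ((s+t)+1) by lia.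
    eapply geq_trans. apply wpow_succ.
    eapply geq_trans. apply geq_app_l, IH. rewrite app_assoc. apply geq_app_r.
    apply geq_sym. replace (Z.succ s) with (s+1) by lia. apply wpow_succ.
  - intros s IH.
    assert (H1 := wpow_succ m n w (Z.pred s + t)).
    replace (Z.pred s + t + 1) with (s + t) by lia.
    replace (Z.pred s + t + 1) with (s + t) in H1 by lia.
    apply cancel_l in H1. eapply geq_trans. apply H1.
    assert (H2 := wpow_succ m n w (Z.pred s)).
    replace (Z.pred s + 1) with s in H2 by lia.
    apply cancel_l in H2.
    eapply geq_trans. apply geq_app_l, IH. rewrite app_assoc. apply geq_app_r.
    apply geq_sym, H2.
Qed.

Lemma wpow_neg m n w k : geq m n (wpow w (-k)) (winv (wpow w k)).
Proof.
  apply cancel_r with (wpow w k).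
  eapply geq_trans. apply geq_sym, wpow_add. replace (-k+k) with 0 by lia.
  simpl. apply geq_sym, inv_l.
Qed.

Lemma wpow_mul m n w a k : geq m n (wpow w (a*k)) (wpow (wpow w a) k).
Proof.
  revert k. apply Z.peano_ind.
  - rewrite Z.mul_0_r. apply geq_refl.
  - intros k IH. replace (a * Z.succ k) with (a*k + a) by lia.
    eapply geq_trans. apply wpow_add.
    replace (Z.succ k) with (k+1) by lia.
    eapply geq_trans. 2: apply geq_sym, wpow_add. rewrite wpow1.
    rewrite app_nil_r. now apply geq_app_r.
  - intros k IH. apply cancel_r with (wpow w a).
    eapply geq_trans. apply geq_sym, wpow_add.
    replace (a * Z.pred k + a) with (a*k) by lia.
    eapply geq_trans. apply IH.
    replace k with (Z.pred k + 1) at 1 by lia.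
    eapply geq_trans. apply wpow_add. rewrite wpow1, app_nil_r. apply geq_refl.
Qed.

Definition comm m n u v := geq m n (u ++ v) (v ++ u).

Lemma comm_sym m n u v : comm m n u v -> comm m n v u.
Proof. unfold comm; intros; now apply geq_sym. Qed.

Lemma comm_nil m n u : comm m n u [].
Proof. unfold comm. rewrite app_nil_r. apply geq_refl. Qed.

Lemma comm_app m n u v1 v2 : comm m n u v1 -> comm m n u v2 -> comm m n u (v1 ++ v2).
Proof.
  unfold comm; intros H1 H2.
  rewrite app_assoc. eapply geq_trans. apply geq_app_r, H1.
  rewrite <- app_assoc. eapply geq_trans. apply geq_app_l, H2.
  rewrite app_assoc. apply geq_refl.
Qed.

Lemma comm_geq m n u v v' : geq m n v v' -> comm m n u v -> comm m n u v'.
Proof.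
  unfold comm; intros E H. eapply geq_trans. apply geq_app_l, geq_sym, E.
  eapply geq_trans. apply H. apply geq_app_r, E.
Qed.

Lemma comm_inv m n u v : comm m n u v -> comm m n u (winv v).
Proof.
  unfold comm; intros H.
  apply geq_trans with (winv v ++ (v ++ u) ++ winv v).
  { apply geq_trans with (([] ++ u) ++ winv v). apply geq_refl.
    rewrite app_assoc. apply geq_app_r. rewrite app_assoc. apply geq_app_r, geq_sym, inv_l. }
  apply geq_trans with (winv v ++ (u ++ v) ++ winv v).
  { apply geq_app_l, geq_app_r, geq_sym, H. }
  rewrite <- app_assoc. apply geq_app_l. apply geq_trans with (u ++ []).
  apply geq_app_l, inv_r. rewrite app_nil_r; apply geq_refl.
Qed.

Lemma comm_wpow_nat m n u v k : comm m n u v -> comm m n u (wpow_nat v k).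
Proof. intro H. induction k; simpl. apply comm_nil. now apply comm_app. Qed.

Lemma comm_wpow m n u v k : comm m n u v -> comm m n u (wpow v k).
Proof.
  intro H. unfold wpow. destruct (0 <=? k). now apply comm_wpow_nat.
  apply comm_wpow_nat. now apply comm_inv.
Qed.

Lemma comm_wpow2 m n u v a b : comm m n u v -> comm m n (wpow u a) (wpow v b).
Proof. intro H. apply comm_wpow, comm_sym, comm_wpow, comm_sym, H. Qed.

Lemma comm_pow_same m n w a b : comm m n (wpow w a) (wpow w b).
Proof.
  unfold comm. eapply geq_trans. apply geq_sym, wpow_add. rewrite Z.add_comm. apply wpow_add.
Qed.

Lemma sub_geq m n gens x x' : geq m n x x' -> in_subgroup m n gens x -> in_subgroup m n gens x'.
Proof.
  intros E H. destruct H.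
  - apply sub_one. eapply geq_trans. apply geq_sym, E. auto.
  - eapply sub_gen; eauto. eapply geq_trans. apply geq_sym, E. auto.
  - eapply sub_geninv; eauto. eapply geq_trans. apply geq_sym, E. auto.
Qed.

Lemma sub_app m n gens u v : in_subgroup m n gens u -> in_subgroup m n gens v ->
  in_subgroup m n gens (u ++ v).
Proof.
  intros Hu Hv. induction Hu.
  - eapply sub_geq. 2: exact Hv. apply geq_sym. apply (geq_app_r m n v) in H. exact H.
  - apply sub_gen with g (y ++ v); auto. rewrite app_assoc. now apply geq_app_r.
  - apply sub_geninv with g (y ++ v); auto. rewrite app_assoc. now apply geq_app_r.
Qed.

Lemma sub_nil m n gens : in_subgroup m n gens [].
Proof. apply sub_one, geq_refl. Qed.

Lemma sub_g m n gens g : In g gens -> in_subgroup m n gens g.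
Proof. intro H. eapply sub_gen; eauto. apply sub_nil. rewrite app_nil_r. apply geq_refl. Qed.

Lemma sub_ginv m n gens g : In g gens -> in_subgroup m n gens (winv g).
Proof. intro H. eapply sub_geninv; eauto. apply sub_nil. rewrite app_nil_r. apply geq_refl. Qed.

Lemma sub_wpow m n gens g k : In g gens -> in_subgroup m n gens (wpow g k).
Proof.
  intro H. unfold wpow. destruct (0 <=? k); induction (Z.to_nat _); simpl;
  try apply sub_nil; apply sub_app; auto using sub_g, sub_ginv.
Qed.

Lemma sub_winv m n gens y : in_subgroup m n gens y -> in_subgroup m n gens (winv y).
Proof.
  induction 1.
  - apply sub_one. apply winv_geq in H. exact H.
  - apply winv_geq in H1. rewrite winv_app in H1. eapply sub_geq. apply geq_sym, H1.
    apply sub_app; auto using sub_ginv.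
  - apply winv_geq in H1. rewrite winv_app, winv_inv in H1. eapply sub_geq. apply geq_sym, H1.
    apply sub_app; auto using sub_g.
Qed.

Lemma sub_mono m n gens gens' y : (forall g, In g gens -> In g gens') ->
  in_subgroup m n gens y -> in_subgroup m n gens' y.
Proof.
  intros Hg. induction 1.
  - now apply sub_one.
  - eapply sub_gen; eauto.
  - eapply sub_geninv; eauto.
Qed.

Definition st := (Z * list (Z*Z))%type.
Definition valid (M : Z) (x : st) : Prop :=
  0 <= fst x < M /\ Forall (fun p => fst p <> 0 /\ 0 < snd p < M) (snd x).
Definition Aact (M k : Z) (x : st) : st := ((fst x + k) mod M, snd x).
Definition Eact (s : Z) (x : st) : st :=
  let (i0, L) := x in
  if Z.eqb s 0 then (i0, L) else
  if Z.eqb i0 0 then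
    match L with
    | [] => (0, [])
    | (j, i) :: L' => if Z.eqb (j + s) 0 then (i, L') else (0, (j + s, i) :: L')
    end
  else (0, (s, i0) :: L).

Definition gen_eqb (g h : gen) : bool :=
  match g, h with Ga, Ga | Gb, Gb => true | _, _ => false end.
Definition other (g : gen) : gen := match g with Ga => Gb | Gb => Ga end.

Definition lact (cg : gen) (M : Z) (l : letter) (x : st) : st :=
  if gen_eqb (fst l) cg then Aact M (if snd l then -1 else 1) x
  else Eact (if snd l then -1 else 1) x.
Definition act cg M (w : word) (x : st) : st := fold_right (lact cg M) x w.

Definition p0 : st := (0, []).

Ltac fixpair := match goal with |- (?u, (?x, ?v) :: ?w) = (?u, (?y, ?v) :: ?w) => apply f_equal2; [reflexivity|]; apply f_equal2; [|reflexivity]; apply f_equal2; [lia|reflexivity] end.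
Ltac eqbs := repeat match goal with |- context [Z.eqb ?a ?b] => destruct (Z.eqb_spec a b) end.

Lemma Eadd M a b x : valid M x -> Eact a (Eact b x) = Eact (a + b) x.
Proof.
  destruct x as [i0 L]. intros [Hi HL]. simpl in *.
  destruct L as [|[j i] L'].
  - unfold Eact. eqbs; simpl; eqbs; try (subst; reflexivity); try lia; try fixpair. all: subst; simpl in *; try fixpair.
  - inversion HL as [|? ? [Hj Hi'] HL']; subst. simpl in *.
    unfold Eact. eqbs; simpl; eqbs; try (subst; reflexivity); try lia; try fixpair. all: subst; simpl in *; try fixpair.
Qed.

Lemma E0 x : Eact 0 x = x.
Proof. destruct x; reflexivity. Qed.

Lemma Ep0 s : Eact s p0 = p0.
Proof. unfold Eact, p0. cbn. destruct (s =? 0); reflexivity. Qed.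

Lemma Evalid M s x : valid M x -> valid M (Eact s x).
Proof.
  destruct x as [i0 L]. intros [Hi HL]. simpl in *. unfold Eact.
  destruct L as [|[j i] L'].
  - eqbs; split; simpl; auto; try lia; repeat constructor; simpl; lia.
  - inversion HL as [|? ? [Hj Hi'] HL']; subst. simpl in *.
    eqbs; split; simpl; auto; try lia; repeat constructor; simpl; auto; lia.
Qed.

Lemma Efix M s x : valid M x -> x <> p0 -> Eact s x = x -> s = 0.
Proof.
  destruct x as [i0 L]. intros [Hi HL] Hne. simpl in *. unfold Eact.
  destruct L as [|[j i] L'].
  - eqbs; intro H; inversion H; try lia. subst; unfold p0 in Hne; congruence.
  - inversion HL as [|? ? [Hj Hi'] HL']; subst. simpl in *.
    eqbs; intro H; inversion H; lia.
Qed.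

Lemma Einj M s s' x : valid M x -> x <> p0 -> Eact s x = Eact s' x -> s = s'.
Proof.
  intros Hv Hn H. assert (Eact (-s') (Eact s x) = Eact (-s') (Eact s' x)) by now rewrite H.
  rewrite !(Eadd M) in H0 by auto. replace (-s' + s') with 0 in H0 by lia. rewrite E0 in H0.
  apply (Efix M) in H0; auto. lia.
Qed.

Lemma Avalid M k x : 0 < M -> valid M x -> valid M (Aact M k x).
Proof. intros HM [H1 H2]. split; simpl; auto. apply Z.mod_pos_bound; lia. Qed.

Lemma Aadd M a b x : 0 < M -> Aact M a (Aact M b x) = Aact M (a + b) x.
Proof.
  intros HM. unfold Aact; simpl. f_equal. rewrite Z.add_mod_idemp_l by lia. f_equal. lia.
Qed.

Lemma A0 M x : valid M x -> Aact M 0 x = x.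
Proof. destruct x; intros [H _]; unfold Aact; simpl in *. rewrite Z.add_0_r, Z.mod_small; auto. Qed.

Lemma AM M x : valid M x -> Aact M M x = x.
Proof.
  destruct x; intros [H _]; unfold Aact; simpl in *.
  replace (z + M) with (z + 1 * M) by lia. rewrite Z.mod_add, Z.mod_small; auto; lia.
Qed.

Lemma lact_valid cg M l x : 0 < M -> valid M x -> valid M (lact cg M l x).
Proof. intros. unfold lact. destruct gen_eqb. now apply Avalid. now apply Evalid. Qed.

Lemma act_valid cg M w x : 0 < M -> valid M x -> valid M (act cg M w x).
Proof. intros HM Hx. induction w; simpl; auto. now apply lact_valid. Qed.

Lemma lact_inv cg M l x : 0 < M -> valid M x -> lact cg M (inv_letter l) (lact cg M l x) = x.
Proof.
  intros HM Hx. destruct l as [g b]. unfold lact, inv_letter; simpl.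
  destruct (gen_eqb g cg), b; simpl.
  - rewrite Aadd by auto. now apply A0.
  - rewrite Aadd by auto. now apply A0.
  - rewrite (Eadd M) by auto. apply E0.
  - rewrite (Eadd M) by auto. apply E0.
Qed.

Lemma act_app cg M u v x : act cg M (u ++ v) x = act cg M u (act cg M v x).
Proof. unfold act. apply fold_right_app. Qed.

Lemma act_winv_l cg M w x : 0 < M -> valid M x -> act cg M (winv w) (act cg M w x) = x.
Proof.
  intros HM Hx. induction w as [|a w IH]; simpl; auto.
  rewrite winv_cons, act_app. simpl. rewrite lact_inv; auto. now apply act_valid.
Qed.

Lemma act_winv_r cg M w x : 0 < M -> valid M x -> act cg M w (act cg M (winv w) x) = x.
Proof. intros. rewrite <- (winv_inv w) at 1. now apply act_winv_l. Qed.

Lemma act_respects m n cg M : 0 < M ->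
  (forall x, valid M x -> act cg M (relator m n) x = x) ->
  forall u v, geq m n u v -> forall x, valid M x -> act cg M u x = act cg M v x.
Proof.
  intros HM Hr u v H. induction H; intros x Hx; auto.
  - symmetry; auto.
  - rewrite IHgeq1; auto.
  - rewrite !act_app. simpl. f_equal.
    rewrite <- (inv_letter_inv l) at 1. apply lact_inv; auto. now apply act_valid.
  - rewrite !act_app. f_equal. apply Hr. now apply act_valid.
Qed.

Lemma act_winv_fix cg M w x : 0 < M -> (forall y, valid M y -> act cg M w y = y) ->
  valid M x -> act cg M (winv w) x = x.
Proof. intros HM H Hx. rewrite <- (H x Hx) at 1. now apply act_winv_l. Qed.

Lemma act_wpow_fix cg M w k x : 0 < M -> (forall y, valid M y -> act cg M w y = y) ->
  valid M x -> act cg M (wpow w k) x = x.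
Proof.
  intros HM H Hx. unfold wpow. destruct (0 <=? k); induction (Z.to_nat _); simpl; auto;
  rewrite act_app, IHn; auto. now apply act_winv_fix.
Qed.

Lemma act_wpow_E cg M w s x : 0 < M -> (forall y, valid M y -> act cg M w y = Eact s y) ->
  forall k, valid M x -> act cg M (wpow w k) x = Eact (s * k) x.
Proof.
  intros HM H k Hx.
  assert (Hi : forall y, valid M y -> act cg M (winv w) y = Eact (-s) y).
  { intros y Hy. rewrite <- (act_winv_l cg M w (Eact (-s) y)) by (auto using Evalid).
    f_equal. rewrite H by (auto using Evalid). rewrite (Eadd M) by auto.
    replace (s + -s) with 0 by lia. now rewrite E0. }
  unfold wpow. destruct (Z.leb_spec 0 k).
  - rewrite <- (Z2Nat.id k) at 2 by lia. induction (Z.to_nat k); simpl.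
    + rewrite Z.mul_0_r. now rewrite E0.
    + rewrite act_app, IHn, H by (auto using Evalid). rewrite (Eadd M) by auto. f_equal; lia.
  - replace k with (- Z.of_nat (Z.to_nat (-k))) at 2 by lia.
    induction (Z.to_nat (-k)); simpl.
    + rewrite Z.mul_0_r. now rewrite E0.
    + rewrite act_app, IHn, Hi by (auto using Evalid). rewrite (Eadd M) by auto. f_equal; lia.
Qed.

Lemma act_wpow_A cg M w s x : 0 < M -> (forall y, valid M y -> act cg M w y = Aact M s y) ->
  forall k, valid M x -> act cg M (wpow w k) x = Aact M (s * k) x.
Proof.
  intros HM H k Hx.
  assert (Hi : forall y, valid M y -> act cg M (winv w) y = Aact M (-s) y).
  { intros y Hy. rewrite <- (act_winv_l cg M w (Aact M (-s) y)) by (auto using Avalid).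
    f_equal. rewrite H by (auto using Avalid). rewrite Aadd by auto.
    replace (s + -s) with 0 by lia. now rewrite A0. }
  unfold wpow. destruct (Z.leb_spec 0 k).
  - rewrite <- (Z2Nat.id k) at 2 by lia. induction (Z.to_nat k); simpl.
    + rewrite Z.mul_0_r. now rewrite A0.
    + rewrite act_app, IHn, H by (auto using Avalid). rewrite Aadd by auto. f_equal; lia.
  - replace k with (- Z.of_nat (Z.to_nat (-k))) at 2 by lia.
    induction (Z.to_nat (-k)); simpl.
    + rewrite Z.mul_0_r. now rewrite A0.
    + rewrite act_app, IHn, Hi by (auto using Avalid). rewrite Aadd by auto. f_equal; lia.
Qed.

Definition cycw (cg : gen) : word := [(cg, false)].
Definition Cw cg (M : Z) : word := wpow (cycw cg) M.
Definition Fw cg (N : Z) : word := wpow [(other cg, false)] N.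

Lemma act_cyc cg M t x : 0 < M -> valid M x -> act cg M (wpow (cycw cg) t) x = Aact M t x.
Proof.
  intros HM Hx. rewrite (act_wpow_A cg M (cycw cg) 1); auto. now rewrite Z.mul_1_l.
  intros y Hy. unfold cycw, act, lact; simpl. destruct cg; reflexivity.
Qed.

Lemma act_C cg M k x : 0 < M -> valid M x -> act cg M (wpow (Cw cg M) k) x = x.
Proof.
  intros HM Hx. apply act_wpow_fix; auto. intros y Hy. unfold Cw. rewrite act_cyc; auto.
  now apply AM.
Qed.

Lemma act_F cg M N k x : 0 < M -> valid M x -> act cg M (wpow (Fw cg N) k) x = Eact (N * k) x.
Proof.
  intros HM Hx. apply act_wpow_E; auto. intros y Hy. unfold Fw.
  rewrite (act_wpow_E cg M _ 1); auto. now rewrite Z.mul_1_l.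
  intros z Hz. unfold act, lact; simpl. destruct cg; reflexivity.
Qed.

Add Parametric Relation m n : word (geq m n)
  reflexivity proved by (geq_refl m n) symmetry proved by (geq_sym m n)
  transitivity proved by (geq_trans m n) as geq_setoid.
Add Parametric Morphism m n : (@app letter) with signature geq m n ==> geq m n ==> geq m n as app_mor.
Proof. intros; now apply geq_app. Qed.

Definition Wd cg N (x : st) : word :=
  wpow (cycw cg) (fst x) ++
  concat (map (fun p => wpow (Fw cg N) (fst p / N) ++ wpow (cycw cg) (snd p)) (snd x)).

Lemma comm_R m n cg N D L :
  (forall a, comm m n D (wpow (Fw cg N) a)) -> (forall b, comm m n D (wpow (cycw cg) b)) ->
  comm m n D (concat (map (fun p => wpow (Fw cg N) (fst p / N) ++ wpow (cycw cg) (snd p)) L)).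
Proof.
  intros H1 H2. induction L; simpl. apply comm_nil. apply comm_app; auto. apply comm_app; auto.
Qed.

Lemma comm_CF m n cg M N q : comm m n (Cw cg M) (Fw cg N) ->
  comm m n (wpow (Cw cg M) q) (Wd cg N (0, [])) /\
  (forall a, comm m n (wpow (Cw cg M) q) (wpow (Fw cg N) a)) /\
  (forall b, comm m n (wpow (Cw cg M) q) (wpow (cycw cg) b)).
Proof.
  intros H. split; [|split].
  - apply comm_nil.
  - intros a. now apply comm_wpow2.
  - intros b. apply comm_sym. apply comm_geq with (wpow (cycw cg) (M * q)).
    unfold Cw. apply wpow_mul. apply comm_pow_same.
Qed.

Lemma comm_W m n cg M N q x : comm m n (Cw cg M) (Fw cg N) ->
  comm m n (wpow (Cw cg M) q) (Wd cg N x).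
Proof.
  intros H. destruct (comm_CF m n cg M N q H) as [_ [H1 H2]].
  unfold Wd. apply comm_app; auto. apply comm_R; auto.
Qed.

Lemma stepA m n cg M N : 0 < M -> comm m n (Cw cg M) (Fw cg N) ->
  forall t i0 L h' x, in_subgroup m n [Cw cg M; Fw cg N] h' ->
  geq m n x (wpow (cycw cg) t ++ Wd cg N (i0, L) ++ h') ->
  exists h, in_subgroup m n [Cw cg M; Fw cg N] h /\ geq m n x (Wd cg N (Aact M t (i0, L)) ++ h).
Proof.
  intros HM HCF t i0 L h' x Hh Hx.
  set (R := concat (map (fun p => wpow (Fw cg N) (fst p / N) ++ wpow (cycw cg) (snd p)) L)).
  set (q := (i0 + t) / M). set (r := (i0 + t) mod M).
  exists (wpow (Cw cg M) q ++ h'). split.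
  { apply sub_app; auto. apply sub_wpow. simpl; auto. }
  assert (Hc : comm m n (wpow (Cw cg M) q) R).
  { destruct (comm_CF m n cg M N q HCF) as [_ [H1 H2]]. apply comm_R; auto. }
  unfold Wd, Aact in *; simpl in *. fold R. fold R in Hx. fold r.
  rewrite Hx. rewrite !app_assoc. rewrite <- (wpow_add m n (cycw cg) t i0).
  replace (t + i0) with (r + M * q) by (unfold r, q; pose proof (Z.div_mod (i0+t) M); lia).
  rewrite (wpow_add m n (cycw cg) r), (wpow_mul m n (cycw cg) M q). fold (Cw cg M).
  rewrite <- !app_assoc. apply geq_app_l. rewrite !app_assoc. apply geq_app_r.
  exact Hc.
Qed.

Lemma stepF m n cg M N : 0 < N ->
  forall t i0 L h' x, in_subgroup m n [Cw cg M; Fw cg N] h' ->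
  geq m n x (wpow (Fw cg N) t ++ Wd cg N (i0, L) ++ h') ->
  exists h, in_subgroup m n [Cw cg M; Fw cg N] h /\ geq m n x (Wd cg N (Eact (N * t) (i0, L)) ++ h).
Proof.
  intros HN t i0 L h' x Hh Hx.
  unfold Eact. destruct (Z.eqb_spec (N*t) 0).
  { assert (t = 0) by nia. subst. exists h'. split; auto. }
  destruct (Z.eqb_spec i0 0).
  - subst i0. destruct L as [|[j i] L'].
    + exists (wpow (Fw cg N) t ++ h'). split.
      { apply sub_app; auto. apply sub_wpow. simpl; auto. }
      rewrite Hx. reflexivity.
    + destruct (Z.eqb_spec (j + N*t) 0).
      * exists h'. split; auto. rewrite Hx. unfold Wd. simpl.
        replace (j / N) with (-t).
        2:{ replace j with ((-t) * N) by lia. rewrite Z.div_mul; lia. }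
        rewrite !app_assoc, <- wpow_add. replace (t + - t) with 0 by lia. simpl. try (rewrite <- !app_assoc; reflexivity).
      * exists h'. split; auto. rewrite Hx. unfold Wd. simpl.
        replace ((j + N * t) / N) with (t + j / N).
        2:{ replace (j + N*t) with (j + t * N) by lia. rewrite Z.div_add; lia. }
        rewrite wpow_add. rewrite <- !app_assoc. reflexivity.
  - exists h'. split; auto. rewrite Hx. unfold Wd. simpl.
    replace (N * t / N) with t.
    2:{ rewrite Z.mul_comm, Z.div_mul; lia. }
    rewrite <- !app_assoc. reflexivity.
Qed.

Definition Hact_prop m n cg M :=
  forall u v, geq m n u v -> forall x, valid M x -> act cg M u x = act cg M v x.

Lemma p0_valid M : 0 < M -> valid M p0.
Proof. intros; split; simpl; auto; lia. Qed.

Lemma step_cyc m n cg M N : 1 < M -> comm m n (Cw cg M) (Fw cg N) -> Hact_prop m n cg M ->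
  forall g t y x h', geq m n g (wpow (cycw cg) t) ->
  geq m n y (Wd cg N (act cg M y p0) ++ h') -> in_subgroup m n [Cw cg M; Fw cg N] h' ->
  geq m n x (g ++ y) ->
  exists h, in_subgroup m n [Cw cg M; Fw cg N] h /\ geq m n x (Wd cg N (act cg M x p0) ++ h).
Proof.
  intros HM HCF Hact g t y x h' Hg Hy Hh Hx.
  assert (Hv : valid M (act cg M y p0)) by (apply act_valid, p0_valid; lia).
  rewrite (Hact _ _ Hx) by (apply p0_valid; lia). rewrite act_app.
  rewrite (Hact _ _ Hg) by auto. rewrite act_cyc by (auto; lia).
  destruct (act cg M y p0) as [i0 L] eqn:E.
  apply stepA with h'; auto; try lia. rewrite Hx, Hg, Hy. reflexivity.
Qed.

Lemma step_F m n cg M N : 1 < M -> 0 < N -> Hact_prop m n cg M ->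
  forall g t y x h', geq m n g (wpow (Fw cg N) t) ->
  geq m n y (Wd cg N (act cg M y p0) ++ h') -> in_subgroup m n [Cw cg M; Fw cg N] h' ->
  geq m n x (g ++ y) ->
  exists h, in_subgroup m n [Cw cg M; Fw cg N] h /\ geq m n x (Wd cg N (act cg M x p0) ++ h).
Proof.
  intros HM HN Hact g t y x h' Hg Hy Hh Hx.
  assert (Hv : valid M (act cg M y p0)) by (apply act_valid, p0_valid; lia).
  rewrite (Hact _ _ Hx) by (apply p0_valid; lia). rewrite act_app.
  rewrite (Hact _ _ Hg) by auto. rewrite act_F by (auto; lia).
  destruct (act cg M y p0) as [i0 L] eqn:E.
  apply stepF with h'; auto. rewrite Hx, Hg, Hy. reflexivity.
Qed.

Lemma inv_main m n cg M N : 1 < M -> 0 < N -> comm m n (Cw cg M) (Fw cg N) -> Hact_prop m n cg M ->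
  forall y, in_subgroup m n [cycw cg; Cw cg M; Fw cg N] y ->
  exists h, in_subgroup m n [Cw cg M; Fw cg N] h /\ geq m n y (Wd cg N (act cg M y p0) ++ h).
Proof.
  intros HM HN HCF Hact y Hy. induction Hy as [x Hx|g y x Hin Hy [h' [Hh Hy']] Hx|g y x Hin Hy [h' [Hh Hy']] Hx].
  - exists []. split. apply sub_nil. rewrite (Hact _ _ Hx) by (apply p0_valid; lia).
    simpl. exact Hx.
  - destruct Hin as [<-|[<-|[<-|[]]]].
    + eapply step_cyc with (t := 1); eauto. rewrite wpow1, app_nil_r. reflexivity.
    + eapply step_cyc with (t := M); eauto. reflexivity.
    + eapply step_F with (t := 1); eauto. rewrite wpow1, app_nil_r. reflexivity.
  - destruct Hin as [<-|[<-|[<-|[]]]].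
    + eapply step_cyc with (t := -1); eauto. rewrite wpowm1, app_nil_r. reflexivity.
    + eapply step_cyc with (t := -M); eauto. unfold Cw. rewrite wpow_neg. reflexivity.
    + eapply step_F with (t := -1); eauto. rewrite wpowm1, app_nil_r. reflexivity.
Qed.

Lemma stab m n cg M N : 1 < M -> 0 < N -> comm m n (Cw cg M) (Fw cg N) -> Hact_prop m n cg M ->
  forall y, in_subgroup m n [cycw cg; Cw cg M; Fw cg N] y ->
  ~ in_subgroup m n [Cw cg M; Fw cg N] y -> act cg M y p0 <> p0.
Proof.
  intros HM HN HCF Hact y Hy Hn E. destruct (inv_main m n cg M N HM HN HCF Hact y Hy) as [h [Hh Hyh]].
  rewrite E in Hyh. apply Hn. eapply sub_geq. apply geq_sym, Hyh. exact Hh.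
Qed.

Definition lval g (l : letter) : Z := if gen_eqb (fst l) g then (if snd l then -1 else 1) else 0.
Definition ecount g (w : word) : Z := fold_right (fun l acc => lval g l + acc) 0 w.

Lemma ecount_app g u v : ecount g (u ++ v) = ecount g u + ecount g v.
Proof. induction u; simpl; auto. unfold ecount in *. simpl. rewrite IHu. lia. Qed.

Lemma lval_inv g l : lval g (inv_letter l) = - lval g l.
Proof. destruct l as [h b]; unfold lval, inv_letter; simpl. destruct gen_eqb, b; reflexivity. Qed.

Lemma ecount_winv g w : ecount g (winv w) = - ecount g w.
Proof.
  induction w; simpl; auto. rewrite winv_cons, ecount_app, IHw. unfold ecount; simpl.
  rewrite lval_inv. fold (ecount g w). lia.
Qed.

Lemma ecount_wpow g w k : ecount g (wpow w k) = k * ecount g w.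
Proof.
  unfold wpow. destruct (Z.leb_spec 0 k).
  - rewrite <- (Z2Nat.id k) at 2 by lia. induction (Z.to_nat k); [reflexivity|].
    change (wpow_nat w (S n)) with (w ++ wpow_nat w n).
    rewrite ecount_app, IHn, Nat2Z.inj_succ. ring.
  - replace k with (- Z.of_nat (Z.to_nat (-k))) at 2 by lia.
    induction (Z.to_nat (-k)); [reflexivity|].
    change (wpow_nat (winv w) (S n)) with (winv w ++ wpow_nat (winv w) n).
    rewrite ecount_app, IHn, ecount_winv, Nat2Z.inj_succ. ring.
Qed.

Lemma ecount_geq m n g u v : geq m n u v -> ecount g u = ecount g v.
Proof.
  induction 1; auto; try congruence.
  - rewrite !ecount_app. unfold ecount; simpl. rewrite lval_inv. lia.
  - rewrite !ecount_app. unfold relator, wcomm. rewrite !ecount_app, !ecount_winv. lia.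
Qed.

Lemma rel_nil m n : geq m n (relator m n) [].
Proof. pose proof (geq_rel m n [] []) as H. rewrite app_nil_r in H. exact H. Qed.

Lemma comm_cd m n : comm m n (wc m) (wd n).
Proof.
  unfold comm. symmetry.
  transitivity ((wd n ++ wc m) ++ relator m n).
  { rewrite rel_nil, app_nil_r. reflexivity. }
  unfold relator, wcomm. rewrite <- !app_assoc.
  rewrite (app_assoc (wc m) (winv (wc m))), inv_r. simpl.
  rewrite (app_assoc (wd n) (winv (wd n))), inv_r. reflexivity.
Qed.

Lemma act_rel m n cg M : 0 < M ->
  ((forall x, valid M x -> act cg M (wc m) x = x) \/ (forall x, valid M x -> act cg M (wd n) x = x)) ->
  forall x, valid M x -> act cg M (relator m n) x = x.
Proof.
  intros HM [Hc|Hd] x Hx; unfold relator, wcomm; rewrite !act_app.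
  - rewrite Hc by (apply act_valid; auto). rewrite act_winv_l by auto.
    apply act_winv_fix; auto.
  - rewrite (Hd x Hx). rewrite (act_winv_fix cg M (wd n) (act cg M (wc m) x)); auto. apply act_winv_l; auto.
    apply act_valid; auto.
Qed.

Lemma act_shapeA cg M N a b c d y : 1 < M ->
  act cg M (wpow (Cw cg M) a ++ wpow (Fw cg N) b ++ y ++ wpow (Cw cg M) c ++ wpow (Fw cg N) d) p0
  = Eact (N * b) (act cg M y p0).
Proof.
  intros HM. assert (V : valid M p0) by (apply p0_valid; lia).
  assert (M0 : 0 < M) by lia.
  assert (V2 : valid M (act cg M y p0)) by (apply act_valid; auto).
  rewrite !act_app. rewrite (act_F cg M N d p0 M0 V), Ep0, (act_C cg M c p0 M0 V).
  rewrite (act_F cg M N b _ M0 V2). apply act_C; auto. apply Evalid; auto.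
Qed.

Lemma act_shapeB cg M N a b c d y : 1 < M ->
  act cg M (wpow (Fw cg N) a ++ wpow (Cw cg M) b ++ y ++ wpow (Fw cg N) c ++ wpow (Cw cg M) d) p0
  = Eact (N * a) (act cg M y p0).
Proof.
  intros HM. assert (V : valid M p0) by (apply p0_valid; lia).
  assert (M0 : 0 < M) by lia.
  assert (V2 : valid M (act cg M y p0)) by (apply act_valid; auto).
  rewrite !act_app. rewrite (act_C cg M d p0 M0 V), (act_F cg M N c p0 M0 V), Ep0.
  rewrite (act_C cg M b _ M0 V2). apply act_F; auto.
Qed.

Lemma winv_shape m n X Y a b c d y :
  geq m n (winv (wpow X a ++ wpow Y b ++ y ++ wpow X c ++ wpow Y d))
    (wpow Y (-d) ++ wpow X (-c) ++ winv y ++ wpow Y (-b) ++ wpow X (-a)).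
Proof.
  rewrite !winv_app, !wpow_neg. rewrite <- !app_assoc. reflexivity.
Qed.

Lemma core m n cg M N : 1 < M -> 0 < N -> comm m n (Cw cg M) (Fw cg N) -> Hact_prop m n cg M ->
  forall y, in_subgroup m n [cycw cg; Cw cg M; Fw cg N] y ->
  ~ in_subgroup m n [Cw cg M; Fw cg N] y ->
  forall b b', Eact (N * b) (act cg M y p0) = Eact (N * b') (act cg M y p0) -> b = b'.
Proof.
  intros HM HN HCF Hact y Hy Hn b b' E.
  apply Einj with (M := M) in E.
  - nia.
  - apply act_valid, p0_valid; lia.
  - eapply stab; eauto.
Qed.

Theorem lemma1 (m n : nat) (Hm : (1 < m)%nat) (Hn : (1 < n)%nat) (x y : word) :
  ~ inH m n x -> ~ inH m n y ->
  ((inA m n x -> inA m n y ->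
    forall al be ga de al' be' ga' de' : Z,
      geq m n x (twisted m n y al be ga de) ->
      geq m n x (twisted m n y al' be' ga' de') ->
      al + ga = al' + ga' /\ be = be' /\ de = de')
  /\
   (inB m n x -> inB m n y ->
    forall al be ga de al' be' ga' de' : Z,
      geq m n x (twisted m n y al be ga de) ->
      geq m n x (twisted m n y al' be' ga' de') ->
      be + de = be' + de' /\ al = al' /\ ga = ga')).
Proof.
  intros HxH HyH.
  assert (Hm' : 1 < Z.of_nat m) by lia. assert (Hn' : 1 < Z.of_nat n) by lia.
  assert (HactA : Hact_prop m n Ga (Z.of_nat m)).
  { intros u v E x0 Hx0. apply (act_respects m n); auto; try lia.
    apply act_rel; try lia. left. intros z Hz.
    change (wc m) with (wpow (cycw Ga) (Z.of_nat m)). rewrite act_cyc by (auto; lia).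
    apply AM; auto. }
  assert (HactB : Hact_prop m n Gb (Z.of_nat n)).
  { intros u v E x0 Hx0. apply (act_respects m n); auto; try lia.
    apply act_rel; try lia. right. intros z Hz.
    change (wd n) with (wpow (cycw Gb) (Z.of_nat n)). rewrite act_cyc by (auto; lia).
    apply AM; auto. }
  assert (HyiH : ~ inH m n (winv y)).
  { intro H. apply HyH. rewrite <- (winv_inv y). now apply sub_winv. }
  split.
  - intros HxA HyA al be ga de al' be' ga' de' H1 H2.
    assert (HT := geq_trans _ _ _ _ _ (geq_sym _ _ _ _ H1) H2).
    assert (HyiA : inA m n (winv y)) by now apply sub_winv.
    assert (HCF : comm m n (Cw Ga (Z.of_nat m)) (Fw Ga (Z.of_nat n))) by apply comm_cd.
    split; [|split].
    + pose proof (ecount_geq m n Ga _ _ HT) as E. unfold twisted in E.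
      rewrite !ecount_app, !ecount_wpow in E.
      assert (E1 : ecount Ga (wc m) = Z.of_nat m * 1) by (unfold wc; apply ecount_wpow).
      assert (E2 : ecount Ga (wd n) = Z.of_nat n * 0) by (unfold wd; apply ecount_wpow).
      rewrite E1, E2 in E. nia.
    + pose proof (HactA _ _ HT p0 ltac:(apply p0_valid; lia)) as E. unfold twisted in E.
      change (wc m) with (Cw Ga (Z.of_nat m)) in E. change (wd n) with (Fw Ga (Z.of_nat n)) in E.
      rewrite !act_shapeA in E by lia.
      eapply core in E; eauto; lia.
    + pose proof (winv_geq _ _ _ _ HT) as HW. unfold twisted in HW.
      change (wc m) with (Cw Ga (Z.of_nat m)) in HW. change (wd n) with (Fw Ga (Z.of_nat n)) in HW.
      assert (HW2 := geq_trans _ _ _ _ _ (geq_sym _ _ _ _ (winv_shape _ _ _ _ _ _ _ _ _))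
                       (geq_trans _ _ _ _ _ HW (winv_shape _ _ _ _ _ _ _ _ _))).
      pose proof (HactA _ _ HW2 p0 ltac:(apply p0_valid; lia)) as E.
      rewrite !act_shapeB in E by lia.
      eapply core in E; eauto; lia.
  - intros HxB HyB al be ga de al' be' ga' de' H1 H2.
    assert (HT := geq_trans _ _ _ _ _ (geq_sym _ _ _ _ H1) H2).
    assert (Hperm : forall g, In g [wb; wc m; wd n] -> In g [cycw Gb; Cw Gb (Z.of_nat n); Fw Gb (Z.of_nat m)]).
    { intros g [<-|[<-|[<-|[]]]]; simpl; tauto. }
    assert (Hperm2 : forall g, In g [Cw Gb (Z.of_nat n); Fw Gb (Z.of_nat m)] -> In g [wc m; wd n]).
    { intros g [<-|[<-|[]]]; simpl; tauto. }
    assert (HyB' := sub_mono _ _ _ _ _ Hperm HyB).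
    assert (HyiB' : in_subgroup m n [cycw Gb; Cw Gb (Z.of_nat n); Fw Gb (Z.of_nat m)] (winv y))
      by now apply sub_winv.
    assert (HyH' : ~ in_subgroup m n [Cw Gb (Z.of_nat n); Fw Gb (Z.of_nat m)] y)
      by (intro H; apply HyH; exact (sub_mono _ _ _ _ _ Hperm2 H)).
    assert (HyiH' : ~ in_subgroup m n [Cw Gb (Z.of_nat n); Fw Gb (Z.of_nat m)] (winv y))
      by (intro H; apply HyiH; exact (sub_mono _ _ _ _ _ Hperm2 H)).
    assert (HCF : comm m n (Cw Gb (Z.of_nat n)) (Fw Gb (Z.of_nat m))) by (apply comm_sym, comm_cd).
    split; [|split].
    + pose proof (ecount_geq m n Gb _ _ HT) as E. unfold twisted in E.
      rewrite !ecount_app, !ecount_wpow in E.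
      assert (E1 : ecount Gb (wc m) = Z.of_nat m * 0) by (unfold wc; apply ecount_wpow).
      assert (E2 : ecount Gb (wd n) = Z.of_nat n * 1) by (unfold wd; apply ecount_wpow).
      rewrite E1, E2 in E. nia.
    + pose proof (HactB _ _ HT p0 ltac:(apply p0_valid; lia)) as E. unfold twisted in E.
      change (wc m) with (Fw Gb (Z.of_nat m)) in E. change (wd n) with (Cw Gb (Z.of_nat n)) in E.
      rewrite !act_shapeB in E by lia.
      eapply core in E; eauto; lia.
    + pose proof (winv_geq _ _ _ _ HT) as HW. unfold twisted in HW.
      change (wc m) with (Fw Gb (Z.of_nat m)) in HW. change (wd n) with (Cw Gb (Z.of_nat n)) in HW.
      assert (HW2 := geq_trans _ _ _ _ _ (geq_sym _ _ _ _ (winv_shape _ _ _ _ _ _ _ _ _))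
                       (geq_trans _ _ _ _ _ HW (winv_shape _ _ _ _ _ _ _ _ _))).
      pose proof (HactB _ _ HW2 p0 ltac:(apply p0_valid; lia)) as E.
      rewrite !act_shapeA in E by lia.
      eapply core in E; eauto; lia.
Qed.
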